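(* Let $G=(V,E,\{w_j\})$ be a reduced instance of the line highway problem with $[s,\ell]$-valuation, and let $r=s/\ell$. Let $\boldsymbol{\tau}$ be the (random) price vector output by the algorithm Line_Cut described in the context. Then \[ \frac{\mathrm{Opt}_{\rm coup}(G)}{\mathbf{E}[\mathrm{Profit}_{\rm coup}(\boldsymbol{\tau})]}\le 4(1-\ln r), \] where the expectation is over the random choices of the algorithm.
   Context: For integers $a\le b$, $[a,b]=\{a,a+1,\dots,b\}$. A reduced instance of the line highway problem is $G=(V,E,\{w_j\})$ with $V=[1,n]$ (items) and a finite multiset $E=\{e_1,\dots,e_m\}$ of customers, each $e_j=[j_s,j_t]$ with $1\le j_s\le j_t\le n$, having valuation $w_j>0$; valuations are integers. It has $[s,\ell]$-valuation if $s=\min_j w_j$ and $\ell=\max_j w_j$. For a price vector $\mathbf p\in\mathbb R^n$ (prices may be negative), $p(e_j)=\sum_{i\in e_j}p_i$, the coupon-model profit is $\mathrm{Profit}_{\rm coup}(\mathbf p)=\sum_{j:\,w_j\ge p(e_j)}\max\{p(e_j),0\}$, and $\mathrm{Opt}_{\rm coup}(G)=\max_{\mathbf p}\mathrm{Profit}_{\rm coup}(\mathbf p)$. The DAG representation of $G$ has vertices $u_0,\dots,u_n$ and, for each $e_j=[j_s,j_t]$, an arc $u_{j_s-1}\to u_{j_t}$ of weight $w_j$; a partial-sum vector $(s_0,\dots,s_n)$ determines prices $p_i=s_i-s_{i-1}$. Algorithm Line_Cut: construct the DAG representation; mark each vertex independently with probability $1/2$; let $L$ be the marked and $R$ the unmarked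 vertices; for each integer $x\in[s,\ell]$ assign partial sum $0$ to all vertices of $L$ and $x$ to all vertices of $R$, obtaining a price vector $\boldsymbol\tau_x$; output a $\boldsymbol\tau$ among $\boldsymbol\tau_s,\dots,\boldsymbol\tau_\ell$ maximizing $\mathrm{Profit}_{\rm coup}$. *)

(* Defs.v *)
From mathcomp Require Import all_boot all_order all_algebra.
From mathcomp Require Import all_classical all_reals exp.
Set Implicit Arguments. Unset Strict Implicit. Unset Printing Implicit Defensive.
Import Order.TTheory GRing.Theory Num.Theory.
Local Open Scope ring_scope.
Local Open Scope classical_set_scope.

(* A customer e_j = [j_s, j_t] with valuation w_j, encoded as ((j_s, j_t), w_j). *)
Definition customer := (nat * nat * nat)%type.
Definition cs (c : customer) : nat := c.1.1.
Definition ct (c : customer) : nat := c.1.2.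
Definition cw (c : customer) : nat := c.2.

Definition reduced_instance (n : nat) (E : seq customer) : Prop :=
  E != [::] /\
  forall c, c \in E -> [/\ (1 <= cs c)%N, (cs c <= ct c)%N, (ct c <= n)%N & (0 < cw c)%N].

Definition val_min (E : seq customer) : nat :=
  \big[minn/cw (head ((0,0),0)%N E)]_(c <- E) cw c.
Definition val_max (E : seq customer) : nat := \max_(c <- E) cw c.

Section Profit.
Variable R : realType.

(* price vector p : items (indexed by nat, item i in [1,n]) -> R ;
   p(e_j) = sum_{i in [j_s, j_t]} p_i *)
Definition bundle_price (p : nat -> R) (c : customer) : R :=
  \sum_(cs c <= i < (ct c).+1) p i.

Definition profit_coup (E : seq customer) (p : nat -> R) : R :=
  \sum_(c <- E | bundle_price p c <= (cw c)%:R) Num.max (bundle_price p c) 0.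

Definition opt_coup (E : seq customer) : R := sup (range (profit_coup E)).

(* Line_Cut.  A marking of the DAG vertices u_0..u_n is L : {ffun 'I_n.+1 -> bool}
   (true = marked, i.e. in L).  Partial sums: 0 on marked vertices, x on unmarked;
   prices p_i = s_i - s_{i-1}. *)
Definition partial_sum (n : nat) (L : {ffun 'I_n.+1 -> bool}) (x : nat) (i : nat) : R :=
  if L (inord i) then 0 else x%:R.

Definition tau (n : nat) (L : {ffun 'I_n.+1 -> bool}) (x : nat) : nat -> R :=
  fun i => partial_sum L x i - partial_sum L x i.-1.

(* profit of the vector output by Line_Cut for marking L: a maximizer among
   tau_s, ..., tau_l, so its profit is the maximum of these profits
   (all profits are >= 0, so 0 is a neutral start). *)
Definition line_cut_profit (n : nat) (E : seq customer) (L : {ffun 'I_n.+1 -> bool}) : R :=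
  \big[Num.max/0]_(val_min E <= x < (val_max E).+1) profit_coup E (tau L x).

(* Expectation over independent fair marks of the n+1 vertices = uniform
   distribution on the 2^(n+1) markings. *)
Definition expected_line_cut_profit (n : nat) (E : seq customer) : R :=
  (2 ^+ n.+1)^-1 * \sum_(L : {ffun 'I_n.+1 -> bool}) line_cut_profit E L.

End Profit.

(* Main.v *)
Require Import Defs.
From mathcomp Require Import all_boot all_order all_algebra.
From mathcomp Require Import all_classical all_reals exp.
From mathcomp Require Import ring lra zify.
Import Order.TTheory GRing.Theory Num.Theory.
Local Open Scope ring_scope.


Section Count.
Variable R : realType.
Variable T : finType.

Definition flip (a : T) (L : {ffun T -> bool}) : {ffun T -> bool} :=
  [ffun i => if i == a then ~~ L i else L i].

Lemma flipK a : involutive (flip a).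
Proof. by move=> L; apply/ffunP => i; rewrite !ffunE; case: eqP => // ->; rewrite negbK. Qed.

Definition Scount (a b : T) (p q : bool) : R :=
  \sum_(L : {ffun T -> bool}) ((L a == p) && (L b == q))%:R.

Lemma Scount_flipl a b p q : a != b -> Scount a b p q = Scount a b (~~ p) q.
Proof.
move=> ab; rewrite /Scount (reindex_inj (inv_inj (flipK a))); apply: eq_bigr => L _.
rewrite eq_sym in ab; rewrite !ffunE eqxx (negbTE ab); by case: (L a); case: p.
Qed.

Lemma Scount_sym a b p q : Scount a b p q = Scount b a q p.
Proof. by apply: eq_bigr => L _; rewrite andbC. Qed.

Lemma Scount_all a b : a != b ->
  Scount a b true false * 4 = 2 ^+ #|T|.
Proof.
move=> ab.
have ba : b != a by rewrite eq_sym.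
have e1 : Scount a b true true = Scount a b true false.
  by rewrite Scount_sym (Scount_flipl _ _ _ _ ba) Scount_sym.
have e2 : Scount a b false false = Scount a b true false.
  by rewrite (Scount_flipl _ _ _ _ ab).
have e3 : Scount a b false true = Scount a b true false.
  by rewrite (Scount_flipl _ _ _ _ ab) e1.
have : Scount a b true true + Scount a b true false + Scount a b false true
   + Scount a b false false = 2 ^+ #|T|.
  rewrite /Scount -!big_split /=.
  rewrite (eq_bigr (fun _ => 1)); last first.
    by move=> L _; case: (L a); case: (L b); rewrite /= ?addr0 ?add0r.
  by rewrite sumr_const card_ffun card_bool -natrX.
rewrite e1 e2 e3 => <-.
ring.
Qed.
End Count.
Section B.
Variable R : realType.

Lemma tele (u : nat -> R) a b : (1 <= a)%N -> (a <= b.+1)%N ->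
  \sum_(a <= i < b.+1) (u i - u i.-1) = u b - u a.-1.
Proof.
move=> a1; elim: b => [|b IH].
  move=> a0; have -> : a = 1%N by apply/eqP; rewrite eqn_leq a0 a1.
  by rewrite big_geq // subrr.
rewrite leq_eqVlt => /orP [/eqP ->|ab]; first by rewrite big_geq // subrr.
rewrite big_nat_recr //= IH //.
by rewrite addrC addrA subrK.
Qed.

Lemma bp_tau n (L : {ffun 'I_n.+1 -> bool}) x c : (1 <= cs c)%N -> (cs c <= ct c)%N ->
  bundle_price (tau R L x) c = partial_sum R L x (ct c) - partial_sum R L x (cs c).-1.
Proof. by move=> h1 h2; rewrite /bundle_price /tau tele // ltnW. Qed.

Lemma profit_ge n (E : seq customer) (L : {ffun 'I_n.+1 -> bool}) x :
  (forall c, c \in E -> (1 <= cs c)%N /\ (cs c <= ct c)%N) ->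
  \sum_(c <- E) (((x <= cw c)%N && L (inord (cs c).-1) && ~~ L (inord (ct c)))%:R * (x%:R : R))
   <= profit_coup E (tau R L x).
Proof.
move=> hE; rewrite /profit_coup [X in _ <= X]big_mkcond /= big_seq [X in _ <= X]big_seq.
apply: ler_sum => c cE; have [h1 h2] := hE c cE.
rewrite bp_tau // /partial_sum.
case: leqP => xc; last first.
  rewrite mul0r; case: ifP => // _; by rewrite le_max lexx orbT.
case: (L (inord (cs c).-1)) => /=; last first.
  rewrite mul0r; case: ifP => // _; by rewrite le_max lexx orbT.
case: (L (inord (ct c))) => /=.
  rewrite mul0r; case: ifP => // _; by rewrite le_max lexx orbT.
rewrite mul1r subr0 ifT; last by rewrite ler_nat.
by rewrite le_max lexx.
Qed.
End B.
Section D.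
Variable R : realType.

Lemma harm (s l : nat) : (1 <= s)%N -> (s <= l)%N ->
  \sum_(s.+1 <= x < l.+1) (x%:R : R)^-1 <= ln (l%:R : R) - ln (s%:R).
Proof.
move=> s1; elim: l => [|l IH]; first by rewrite leqn0 => /eqP s0; rewrite s0 in s1.
rewrite leq_eqVlt => /orP [/eqP <-|sl].
  by rewrite big_geq // subrr.
rewrite big_nat_recr //=.
have h := IH sl.
suff H : (l.+1%:R : R)^-1 <= ln (l.+1%:R : R) - ln (l%:R).
  apply: le_trans (lerD h H) _.
  by rewrite addrC addrA subrK.
have l0 : (0 < l)%N by apply: leq_trans s1 sl.
have lp : (0:R) < l%:R by rewrite ltr0n.
have lp1 : (0:R) < l.+1%:R by rewrite ltr0n.
have := @le_ln1Dx R (- (l.+1%:R)^-1).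
have hneg : -1 < - (l.+1%:R : R)^-1.
  rewrite ltrN2 invf_lt1 // ltr1n ltnS //.
move=> /(_ hneg).
have -> : 1 - (l.+1%:R : R)^-1 = l%:R / l.+1%:R.
  by rewrite -[l.+1]addn1 natrD; field; rewrite natr1 pnatr_eq0.
rewrite lnM ?posrE ?invr_gt0 // lnV ?posrE //.
by move=> H; rewrite -lerN2 opprB.
Qed.

Definition Nr (E : seq customer) (x : nat) : R :=
  \sum_(c <- E) ((x <= cw c)%N)%:R.

Lemma partD (E : seq customer) (s l : nat) (K : R) :
  (1 <= s)%N -> (s <= l)%N -> (forall c, c \in E -> (s <= cw c <= l)%N) ->
  (forall x, (s <= x <= l)%N -> x%:R * Nr E x <= K) ->
  \sum_(c <- E) ((cw c)%:R : R) <= K * (1 + (ln (l%:R : R) - ln (s%:R))).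
Proof.
move=> s1 sl bnd hK.
have per : forall c, c \in E ->
    ((cw c)%:R : R) = \sum_(1 <= x < l.+1) ((x <= cw c)%N)%:R.
  move=> c /bnd /andP [sc cl].
  have c1 : (1 <= cw c)%N by apply: leq_trans sc.
  rewrite (@big_cat_nat _ _ _ (cw c).+1) //=.
  rewrite (eq_big_nat _ _ (F2 := fun _ => 1)); last first.
    by move=> i /andP [_ ]; rewrite ltnS => ->.
  rewrite [X in _ + X](eq_big_nat _ _ (F2 := fun _ => 0)); last first.
    by move=> i /andP [ci _]; rewrite leqNgt ci.
  by rewrite !sumr_const_nat mul0rn addr0 subn1.
rewrite big_seq (eq_bigr _ per) -big_seq exchange_big /=.
have Ns0 : 0 <= Nr E s by apply: sumr_ge0 => c _; rewrite ler0n.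
have K0 : 0 <= K.
  apply: le_trans (hK s _); first by apply: mulr_ge0; rewrite ?ler0n.
  by rewrite leqnn sl.
rewrite (@big_cat_nat _ _ _ s.+1) //=.
rewrite mulrDr mulr1; apply: lerD.
  rewrite (eq_big_nat _ _ (F2 := fun _ => Nr E s)); last first.
    move=> x /andP [_ xs]; rewrite /Nr big_seq [RHS]big_seq; apply: eq_bigr => c cE.
    have /andP [sc _] := bnd c cE.
    by rewrite sc (leq_trans _ sc) // -ltnS.
  rewrite sumr_const_nat subn1 /= -mulr_natl.
  by apply: hK; rewrite leqnn sl.
apply: le_trans _ (ler_wpM2l K0 (@harm s l s1 sl)).
rewrite mulr_sumr; apply: ler_sum_nat => x /andP [sx xl].
have x0 : (0:R) < x%:R by rewrite ltr0n (leq_trans _ sx).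
rewrite -/(Nr E x). rewrite -[Nr E x](mulKf (lt0r_neq0 x0)) mulrC.
apply: ler_wpM2r; first by rewrite invr_ge0 ltW.
by apply: hK; rewrite (ltnW sx) -ltnS xl.
Qed.
End D.
Section C.
Variable R : realType.

Lemma le_bigmax0 (F : nat -> R) (r : seq nat) x : x \in r ->
  F x <= \big[Num.max/0]_(i <- r) F i.
Proof.
elim: r => // y r IH; rewrite inE big_cons => /orP [/eqP ->|xr].
  by rewrite le_max lexx.
by rewrite le_max IH ?orbT.
Qed.

Lemma partC n (E : seq customer) x :
  (forall c, c \in E -> [/\ (1 <= cs c)%N, (cs c <= ct c)%N & (ct c <= n)%N]) ->
  (val_min E <= x <= val_max E)%N ->
  x%:R * Nr R E x <= 4 * expected_line_cut_profit R n E.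
Proof.
move=> hE xr.
pose F (L : {ffun 'I_n.+1 -> bool}) := \sum_(c <- E)
  (((x <= cw c)%N && L (inord (cs c).-1) && ~~ L (inord (ct c)))%:R * (x%:R : R)).
have step1 : \sum_(L : {ffun 'I_n.+1 -> bool}) F L <= \sum_(L : {ffun 'I_n.+1 -> bool}) line_cut_profit R E L.
  apply: ler_sum => L _; apply: le_trans (@profit_ge R n E L x _) _.
    by move=> c /hE [].
  rewrite /line_cut_profit; apply: (le_bigmax0 (fun y => profit_coup E (tau R L y))).
  by rewrite mem_index_iota ltnS.
have step2 : \sum_(L : {ffun 'I_n.+1 -> bool}) F L = (2 ^+ n.+1 / 4) * (x%:R * Nr R E x).
  rewrite /F exchange_big /= /Nr mulr_sumr mulr_sumr big_seq [RHS]big_seq.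
  apply: eq_bigr => c cE.
  have [h1 h2 h3] := hE c cE.
  have ab : (inord (cs c).-1 : 'I_n.+1) != inord (ct c).
    have e1 : ((inord (cs c).-1 : 'I_n.+1) : nat) = (cs c).-1.
      by rewrite inordK // ltnS (leq_trans (leq_pred _) (leq_trans h2 h3)).
    have e2 : ((inord (ct c) : 'I_n.+1) : nat) = ct c by rewrite inordK // ltnS.
    apply/eqP => e; move: e1; rewrite e e2 => e3; lia.
  have S4 := @Scount_all R _ _ _ ab; rewrite card_ord in S4; rewrite -S4.
  rewrite (eq_bigr (fun L : {ffun 'I_n.+1 -> bool} => ((x <= cw c)%:R * x%:R) *
       ((L (inord (cs c).-1) == true) && (L (inord (ct c)) == false))%:R)); last first.
    move=> L _; case: (x <= cw c)%N; case: (L _); case: (L _); rewrite /= ?mul0r ?mulr0 ?mul1r ?mulr1 //.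
  rewrite -mulr_sumr /Scount.
  have h4 : (4:R) != 0 by rewrite pnatr_eq0.
  by field.
have step3 : (0:R) < 2 ^+ n.+1 by rewrite exprn_gt0.
rewrite /expected_line_cut_profit.
have h : (2 ^+ n.+1 : R) != 0 by rewrite gt_eqF.
have H1 : x%:R * Nr R E x = 4 * ((2 ^+ n.+1)^-1 * \sum_(L : {ffun 'I_n.+1 -> bool}) F L).
  by rewrite step2; field.
rewrite H1; apply: ler_wpM2l => //; apply: ler_wpM2l => //.
by rewrite invr_ge0 ltW.
Qed.
End C.
Lemma bigmin_le (r : seq customer) idx c : c \in r ->
  (\big[minn/idx]_(d <- r) cw d <= cw c)%N.
Proof.
elim: r => // y r IH; rewrite inE big_cons => /orP [/eqP ->|cr].
  by rewrite geq_minl.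
by rewrite geq_min IH ?orbT.
Qed.

Lemma profit_le_W (R : realType) (E : seq customer) p :
  profit_coup E p <= \sum_(c <- E) ((cw c)%:R : R).
Proof.
rewrite /profit_coup big_mkcond /=; apply: ler_sum => c _.
case: ifP => h; last by rewrite ler0n.
by rewrite ge_max h ler0n.
Qed.

Theorem theorem2 (R : realType) (n : nat) (E : seq customer) :
  reduced_instance n E ->
  let r : R := (val_min E)%:R / (val_max E)%:R in
  opt_coup R E <= 4 * (1 - ln r) * expected_line_cut_profit R n E.
Proof.
move=> [Ene hE]; cbv zeta.
have bnd : forall c, c \in E -> (val_min E <= cw c <= val_max E)%N.
  move=> c cE; rewrite /val_min bigmin_le //=.
  exact: (@leq_bigmax_seq _ E xpredT cw c cE).
have s1 : (1 <= val_min E)%N.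
  rewrite /val_min big_seq; apply: (big_ind (fun m => 0 < m)%N).
  - clear bnd; case: E Ene hE => // c0 E' _ hE /=; by have [] := hE c0 (mem_head _ _).
  - by move=> a b a0 b0; rewrite leq_min a0 b0.
  - by move=> c cE; have [] := hE c cE.
have [c0 c0E] : exists c, c \in E.
  case Eq: (E) Ene => [|c0 E'] //; rewrite -Eq => _; exists c0; by rewrite Eq mem_head.
have sl : (val_min E <= val_max E)%N.
  by have /andP [a b] := bnd c0 c0E; apply: leq_trans b.
have hE' : forall c, c \in E -> [/\ (1 <= cs c)%N, (cs c <= ct c)%N & (ct c <= n)%N].
  by move=> c cE; have [] := hE c cE.
have W1 : opt_coup R E <= \sum_(c <- E) ((cw c)%:R : R).
  apply: ge_sup; first by exists (profit_coup E (fun _ => 0)), (fun _ => 0).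
  by move=> y [p _ <-]; apply: profit_le_W.
apply: le_trans W1 _.
apply: le_trans (@partD R E _ _ (4 * expected_line_cut_profit R n E) s1 sl bnd _) _.
  by move=> x xr; apply: partC.
have s0 : (0:R) < (val_min E)%:R by rewrite ltr0n.
have l0 : (0:R) < (val_max E)%:R by rewrite ltr0n (leq_trans s1 sl).
rewrite lnM ?posrE ?invr_gt0 // lnV ?posrE //.
rewrite le_eqVlt; apply/orP; left; apply/eqP; ring.
Qed.
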